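(* In the production planning setting described in the context (general case), fix $\pmb{x}\in\mathbb{X}$ and let $G$, the arc lengths $c_{uw}$, arc weights $\delta_{uw}$ and the restricted longest path problem (RLP) be as defined in the context. Then for every real $C^*$: a cumulative demand scenario with cost $C^*$ is optimal for the adversarial problem $\max_{\pmb{D}\in\mathcal{U}^d}\sum_{t\in[T]}\max\{f_I(X_t,D_t),f_B(X_t,D_t)\}$ if and only if there is an optimal $\mathfrak{s}$-$\mathfrak{t}$ path of length $C^*$ for the RLP instance.
   Context: There are $T\ge 1$ periods, $[T]=\{1,\dots,T\}$. Given are a production cost $c^P$, an inventory cost $c^I$, a backordering cost $c^B$ and a selling price $b^P$, and a set $\mathbb{X}\subseteq\mathbb{R}^T_+$ of feasible production plans described by finitely many linear constraints; for a plan $X_t=\sum_{i\in[t]}x_i$. For $t\in[T-1]$ let $f_I(X_t,D_t)=c^I(X_t-D_t)$, $f_B(X_t,D_t)=c^B(D_t-X_t)$; for $t=T$ let $f_I(X_T,D_T)=c^I(X_T-D_T)+c^PX_T-b^PD_T$, $f_B(X_T,D_T)=c^B(D_T-X_T)+c^PX_T-b^PX_T$. Nominal cumulative demands $\widehat{D}_t\ge0$ are nondecreasing in $t$, deviations $0\le\Delta_t\le\widehat{D}_t$. $\mathcal{U}^d=\{\pmb{D}: D_t\le D_{t+1}\ (t\in[T-1]),\ D_t\in[\widehat{D}_t-\Delta_t,\widehat{D}_t+\Delta_t],\ |\{t:D_t\ne\widehat{D}_t\}|\le\Gamma^d\}$, $\Gamma^d\in\{0,\dots,T\}$ (intervals may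 overlap). For $k\in[T]$ let $\mathcal{D}_k=[\widehat{D}_k-\Delta_k,\widehat{D}_k+\Delta_k]\cap\bigcup_{t\in[T]}\{\widehat{D}_t-\Delta_t,\widehat{D}_t,\widehat{D}_t+\Delta_t\}$. The directed layered graph $G$ has layers $V_0=\{\mathfrak{s}\}$, $V_1,\dots,V_T$, $V_{T+1}=\{\mathfrak{t}\}$, where $V_k$ ($k\in[T]$) contains exactly one node $u$ for each value $D_u\in\mathcal{D}_k$. Arcs: $(\mathfrak{s},w)$ for every $w\in V_1$; $(u,w)$ for $u\in V_{k-1}$, $w\in V_k$ ($k=2,\dots,T$) whenever $D_u\le D_w$; $(u,\mathfrak{t})$ for every $u\in V_T$. An arc $(u,w)$ with $w\in V_k$, $k\in[T]$, has length $c_{uw}=\max\{f_I(X_k,D_w),f_B(X_k,D_w)\}$ and weight $\delta_{uw}=1$ if $D_w\ne\widehat{D}_k$ and $\delta_{uw}=0$ if $D_w=\widehat{D}_k$; arcs into $\mathfrak{t}$ have length $0$ and weight $0$. The RLP instance asks for an $\mathfrak{s}$-$\mathfrak{t}$ path $p$ with $\sum_{(u,w)\in p}\delta_{uw}\le\Gamma^d$ maximizing $\sum_{(u,w)\in p}c_{uw}$. The cost of a scenario $\pmb{D}$ is $\sum_{t\in[T]}\max\{f_I(X_t,D_t),f_B(X_t,D_t)\}$. *)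

(* Defs.v *)
(* Periods are indexed by nat t with 1 <= t <= T;
   plans x, demands D, Dhat, Delta are functions nat -> R (values outside
   [1,T] are irrelevant). *)
From HB Require Import structures.
From mathcomp Require Import all_boot all_order all_algebra.
Set Implicit Arguments. Unset Strict Implicit. Unset Printing Implicit Defensive.
Import Order.TTheory GRing.Theory Num.Theory.
Local Open Scope ring_scope.

Section Defs.
Variable R : realFieldType.

Definition inXset (T m : nat) (A : 'M[R]_(m, T)) (b : 'cV[R]_m) (x : nat -> R) : Prop :=
  (forall t, (1 <= t <= T)%N -> 0 <= x t) /\
  (forall i : 'I_m, \sum_(j < T) A i j * x j.+1 <= b i 0).

Definition cumX (x : nat -> R) (t : nat) : R := \sum_(1 <= i < t.+1) x i.

Definition fI (T : nat) (cP cI bP : R) (t : nat) (X D : R) : R :=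
  if t == T then cI * (X - D) + cP * X - bP * D else cI * (X - D).

Definition fB (T : nat) (cP cB bP : R) (t : nat) (X D : R) : R :=
  if t == T then cB * (D - X) + cP * X - bP * X else cB * (D - X).

Definition pcost (T : nat) (cP cI cB bP : R) (x : nat -> R) (t : nat) (d : R) : R :=
  Num.max (fI T cP cI bP t (cumX x t) d) (fB T cP cB bP t (cumX x t) d).

Definition scen_cost (T : nat) (cP cI cB bP : R) (x : nat -> R) (D : nat -> R) : R :=
  \sum_(1 <= t < T.+1) pcost T cP cI cB bP x t (D t).

Definition inUd (T : nat) (Dhat Delta : nat -> R) (Gam : nat) (D : nat -> R) : Prop :=
  (forall t, (1 <= t < T)%N -> D t <= D t.+1) /\
  (forall t, (1 <= t <= T)%N -> Dhat t - Delta t <= D t <= Dhat t + Delta t) /\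
  (\sum_(1 <= t < T.+1) (D t != Dhat t : nat) <= Gam)%N.

Definition breakpoints (T : nat) (Dhat Delta : nat -> R) : seq R :=
  flatten [seq [:: Dhat t - Delta t; Dhat t; Dhat t + Delta t] | t <- iota 1 T].

Definition inDk (T : nat) (Dhat Delta : nat -> R) (k : nat) (d : R) : bool :=
  (Dhat k - Delta k <= d <= Dhat k + Delta k) && (d \in breakpoints T Dhat Delta).

(* nodes of the layered graph G: source s, sink t, and node (k, d) of layer V_k *)
Inductive node : Type := Src | Snk | Nd of nat & R.

(* arcs of G (the target node is required to be a genuine node of its layer) *)
Definition arc (T : nat) (Dhat Delta : nat -> R) (u w : node) : bool :=
  match u, w with
  | Src, Nd k d => (k == 1)%N && inDk T Dhat Delta k d
  | Nd k d, Nd k' d' =>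
      [&& (2 <= k')%N, (k' <= T)%N, k' == k.+1, d <= d' & inDk T Dhat Delta k' d']
  | Nd k d, Snk => (1 <= k)%N && (k == T)
  | _, _ => false
  end.

Definition arc_len (T : nat) (cP cI cB bP : R) (x : nat -> R) (u w : node) : R :=
  match w with
  | Nd k d => pcost T cP cI cB bP x k d
  | _ => 0
  end.

Definition arc_wt (Dhat : nat -> R) (u w : node) : nat :=
  match w with
  | Nd k d => (d != Dhat k : nat)
  | _ => 0%N
  end.

(* an s-t path is given by its node sequence after s: Src :: p *)
Definition st_path (T : nat) (Dhat Delta : nat -> R) (p : seq node) : Prop :=
  path (arc T Dhat Delta) Src p /\ last Src p = Snk.

Definition path_len (T : nat) (cP cI cB bP : R) (x : nat -> R) (p : seq node) : R :=
  \sum_(e <- zip (Src :: p) p) arc_len T cP cI cB bP x e.1 e.2.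

Definition path_wt (Dhat : nat -> R) (p : seq node) : nat :=
  (\sum_(e <- zip (Src :: p) p) arc_wt Dhat e.1 e.2)%N.

Definition rlp_feasible (T : nat) (Dhat Delta : nat -> R) (Gam : nat) (p : seq node) : Prop :=
  st_path T Dhat Delta p /\ (path_wt Dhat p <= Gam)%N.

End Defs.

(* Main.v *)
Require Import Defs.
From HB Require Import structures.
From mathcomp Require Import all_boot all_order all_algebra.
From mathcomp Require Import ring lra zify.
Import Order.TTheory GRing.Theory Num.Theory.
Require Import Defs.
Set Implicit Arguments. Unset Strict Implicit. Unset Printing Implicit Defensive.
Local Open Scope ring_scope.

Lemma max_below (R : realFieldType) (s : seq R) (v : R) :
  has (fun y => y < v) s ->
  exists a, [/\ a \in s, a < v & forall y, y \in s -> y < v -> y <= a].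
Proof.
elim: s => [|z s IH] //= /orP [hz|hs].
  case hs: (has (fun y => y < v) s).
    have [a [ha1 ha2 ha3]] := IH hs.
    exists (Num.max z a); split.
    - by rewrite /Num.max; case: ifP => _; rewrite inE ?eqxx ?ha1 ?orbT.
    - by rewrite gt_max hz ha2.
    - move=> y; rewrite inE => /orP [/eqP->|ys] yv; rewrite le_max ?lexx //.
      by rewrite ha3 ?orbT.
  exists z; split; first by rewrite inE eqxx.
    done.
  move=> y; rewrite inE => /orP [/eqP->|ys] yv; first by [].
  by move/negbT/hasPn: hs => /(_ y ys); rewrite yv.
have [a [ha1 ha2 ha3]] := IH hs.
case hz: (z < v).
  exists (Num.max z a); split.
  - by rewrite /Num.max; case: ifP => _; rewrite inE ?eqxx ?ha1 ?orbT.
  - by rewrite gt_max hz ha2.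
  - move=> y; rewrite inE => /orP [/eqP->|ys] yv; rewrite le_max ?lexx //.
    by rewrite ha3 ?orbT.
exists a; split => //; first by rewrite inE ha1 orbT.
move=> y; rewrite inE => /orP [/eqP->|ys] yv; first by rewrite hz in yv.
exact: ha3.
Qed.

Lemma min_above (R : realFieldType) (s : seq R) (v : R) :
  has (fun y => v < y) s ->
  exists b, [/\ b \in s, v < b & forall y, y \in s -> v < y -> b <= y].
Proof.
move=> h.
have h' : has (fun y => y < - v) (map -%R s).
  by rewrite has_map; apply: sub_has h => y /=; rewrite ltrN2.
have [a [ha1 ha2 ha3]] := max_below h'.
exists (- a); split.
- by move/mapP: ha1 => [y ys ->]; rewrite opprK.
- by rewrite ltrNr.
- move=> y ys vy; rewrite lerNl; apply: ha3.
    by apply/mapP; exists y.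
  by rewrite ltrN2.
Qed.

Lemma max_aff (R : realFieldType) (l A1 A2 B1 B2 : R) :
  0 <= l -> l <= 1 ->
  Num.max (l * A1 + (1 - l) * A2) (l * B1 + (1 - l) * B2)
  <= l * Num.max A1 B1 + (1 - l) * Num.max A2 B2.
Proof.
move=> l0 l1.
have m0 : 0 <= 1 - l by rewrite subr_ge0.
rewrite ge_max; apply/andP; split; apply: lerD; apply: ler_wpM2l => //;
  by rewrite le_max lexx ?orbT.
Qed.

Lemma pcost_convex (R : realFieldType) T cP cI cB bP (x : nat -> R) t (l p q : R) :
  0 <= l -> l <= 1 ->
  pcost T cP cI cB bP x t (l * p + (1 - l) * q) <=
  l * pcost T cP cI cB bP x t p + (1 - l) * pcost T cP cI cB bP x t q.
Proof.
move=> l0 l1; rewrite /pcost.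
set X := cumX x t.
have -> : fI T cP cI bP t X (l * p + (1 - l) * q) =
   l * fI T cP cI bP t X p + (1 - l) * fI T cP cI bP t X q.
  by rewrite /fI; case: (t == T); ring.
have -> : fB T cP cB bP t X (l * p + (1 - l) * q) =
   l * fB T cP cB bP t X p + (1 - l) * fB T cP cB bP t X q.
  by rewrite /fB; case: (t == T); ring.
exact: max_aff.
Qed.

Lemma comb_le_max (R : realFieldType) (l X Y : R) :
  0 <= l -> l <= 1 -> l * X + (1 - l) * Y <= Num.max X Y.
Proof.
move=> l0 l1; rewrite le_max; case: (leP X Y) => h.
  by apply/orP; right; nra.
by apply/orP; left; nra.
Qed.


Lemma bp_mem (R : realFieldType) T (Dhat Delta : nat -> R) t :
  (1 <= t <= T)%N ->
  [/\ Dhat t - Delta t \in breakpoints T Dhat Delta,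
      Dhat t \in breakpoints T Dhat Delta &
      Dhat t + Delta t \in breakpoints T Dhat Delta].
Proof.
move=> /andP [h1 h2].
have ti : t \in iota 1 T by rewrite mem_iota h1 add1n ltnS.
split; apply/flatten_mapP; exists t => //; by rewrite !inE eqxx ?orbT.
Qed.

Lemma shift_ok (R : realFieldType) T (Dhat Delta : nat -> R) Gam (D : nat -> R) v w :
  inUd T Dhat Delta Gam D -> v \notin breakpoints T Dhat Delta ->
  (forall t, (1 <= t <= T)%N -> D t < v -> D t <= w) ->
  (forall t, (1 <= t <= T)%N -> v < D t -> w <= D t) ->
  (forall t, (1 <= t <= T)%N -> D t = v -> Dhat t - Delta t <= w <= Dhat t + Delta t) ->
  inUd T Dhat Delta Gam (fun t => if D t == v then w else D t).
Proof.
move=> [hm [hb hg]] hv h1 h2 h3; split; [|split].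
- move=> t /andP [ta tb].
  have r1 : (1 <= t <= T)%N by rewrite ta ltnW.
  have r2 : (1 <= t.+1 <= T)%N by rewrite tb andbT.
  have := hm t; rewrite ta tb => /(_ isT) hle.
  case: (eqVneq (D t) v) => e1; case: (eqVneq (D t.+1) v) => e2 //.
  + apply: h2 => //; rewrite lt_neqAle eq_sym e2 /=; by rewrite -e1.
  + apply: h1 => //; rewrite lt_neqAle e1 /=; by rewrite -e2.
- move=> t ht; case: (eqVneq (D t) v) => e; first exact: h3.
  exact: hb.
- apply: leq_trans hg; rewrite !big_seq; apply: leq_sum => t.
  rewrite mem_index_iota ltnS => ht.
  case: (eqVneq (D t) v) => e //.
  have [_ hd _] := bp_mem Dhat Delta ht.
  have -> : (D t != Dhat t) = true.
    by apply/negP => /eqP de; move: hv; rewrite -e de hd.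
  by case: (_ != _).
Qed.


Lemma cost_comb (R : realFieldType) T cP cI cB bP (x : nat -> R) (D Da Db : nat -> R) l :
  0 <= l -> l <= 1 -> (forall t, D t = l * Da t + (1 - l) * Db t) ->
  scen_cost T cP cI cB bP x D <=
  Num.max (scen_cost T cP cI cB bP x Da) (scen_cost T cP cI cB bP x Db).
Proof.
move=> l0 l1 hD; apply: le_trans (comb_le_max _ _ l0 l1).
rewrite /scen_cost !mulr_sumr -big_split /=.
apply: ler_sum => t _; rewrite hD; exact: pcost_convex.
Qed.

Lemma reduce (R : realFieldType) T cP cI cB bP (x : nat -> R) (Dhat Delta : nat -> R) Gam n :
  forall (D : nat -> R) (s : seq R), (size s <= n)%N -> inUd T Dhat Delta Gam D ->
  (forall t, (1 <= t <= T)%N -> D t \notin breakpoints T Dhat Delta -> D t \in s) ->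
  exists D', [/\ inUd T Dhat Delta Gam D',
     (forall t, (1 <= t <= T)%N -> D' t \in breakpoints T Dhat Delta) &
     scen_cost T cP cI cB bP x D <= scen_cost T cP cI cB bP x D'].
Proof.
set bp := breakpoints T Dhat Delta.
elim: n => [|n IH] D s hs hU hD;
  (case: (boolP (has (fun t => D t \notin bp) (iota 1 T))) => [/hasP [t0 t0in ht0] | hn];
  last first).
- exists D; split => // t ht; move/hasPn: hn => /(_ t); rewrite negbK; apply.
  by rewrite mem_iota add1n ltnS.
- move: (hD t0); rewrite mem_iota add1n ltnS in t0in; move=> /(_ t0in ht0).
  by move: hs; rewrite leqn0 => /nilP ->.
- exists D; split => // t ht; move/hasPn: hn => /(_ t); rewrite negbK; apply.
  by rewrite mem_iota add1n ltnS.
rewrite mem_iota add1n ltnS in t0in.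
set v := D t0.
have vs : v \in s by exact: hD.
set L := bp ++ [seq D t | t <- iota 1 T].
have hU' := hU; case: hU' => [hm [hb hg]].
have [hlo hhat hup] := bp_mem Dhat Delta t0in.
have /andP [lv vu] := hb t0 t0in.
have hlt : Dhat t0 - Delta t0 < v.
  rewrite lt_neqAle lv andbT; apply/negP => /eqP e; by move: ht0; rewrite -/v -e hlo.
have hgt : v < Dhat t0 + Delta t0.
  rewrite lt_neqAle vu andbT; apply/negP => /eqP e; by move: ht0; rewrite -/v e hup.
have [a [ha1 ha2 ha3]] : exists a, [/\ a \in L, a < v & forall y, y \in L -> y < v -> y <= a].
  apply: max_below; apply/hasP; exists (Dhat t0 - Delta t0) => //.
  by rewrite mem_cat hlo.
have [b [hb1 hb2 hb3]] : exists b, [/\ b \in L, v < b & forall y, y \in L -> v < y -> b <= y].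
  apply: min_above; apply/hasP; exists (Dhat t0 + Delta t0) => //.
  by rewrite mem_cat hup.
have inL : forall t, (1 <= t <= T)%N -> D t \in L.
  move=> t ht; rewrite mem_cat; apply/orP; right; apply/mapP; exists t => //.
  by rewrite mem_iota add1n ltnS.
have inLlo : forall t, (1 <= t <= T)%N -> Dhat t - Delta t \in L.
  by move=> t ht; have [? _ _] := bp_mem Dhat Delta ht; rewrite mem_cat; apply/orP; left.
have inLup : forall t, (1 <= t <= T)%N -> Dhat t + Delta t \in L.
  by move=> t ht; have [_ _ ?] := bp_mem Dhat Delta ht; rewrite mem_cat; apply/orP; left.
set Da := fun t => if D t == v then a else D t.
set Db := fun t => if D t == v then b else D t.
have Ua : inUd T Dhat Delta Gam Da.
  apply: shift_ok => //.
  - by move=> t ht htv; apply: ha3 => //; exact: inL.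
  - by move=> t ht htv; apply: ltW; apply: lt_trans ha2 htv.
  - move=> t ht e; have /andP [l1 u1] := hb t ht; apply/andP; split.
      apply: ha3; first exact: inLlo.
      rewrite lt_neqAle -e l1 andbT; apply/negP => /eqP ee.
      have [hh _ _] := bp_mem Dhat Delta ht; by move: ht0; rewrite -/v -e -ee hh.
    by apply: le_trans (ltW ha2) _; rewrite -e.
have Ub : inUd T Dhat Delta Gam Db.
  apply: shift_ok => //.
  - by move=> t ht htv; apply: ltW; apply: lt_trans htv hb2.
  - by move=> t ht htv; apply: hb3 => //; exact: inL.
  - move=> t ht e; have /andP [l1 u1] := hb t ht; apply/andP; split.
      by apply: le_trans (ltW hb2); rewrite -e.
    apply: hb3; first exact: inLup.
    rewrite lt_neqAle -e u1 andbT; apply/negP => /eqP ee.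
    have [_ _ hh] := bp_mem Dhat Delta ht; by move: ht0; rewrite -/v -e ee hh.
set s' := [seq y <- s | y != v].
have hs' : (size s' <= n)%N.
  rewrite -ltnS; apply: leq_trans hs.
  rewrite size_filter -(count_predC (fun y => y != v) s) -[X in (X < _)%N]addn0 ltn_add2l.
  by rewrite -has_count; apply/hasP; exists v => //=; rewrite eqxx.
have sub : forall w, w \in L -> w != v -> forall t, (1 <= t <= T)%N ->
    (if D t == v then w else D t) \notin bp -> (if D t == v then w else D t) \in s'.
  move=> w wL wv t ht; case: (eqVneq (D t) v) => e nb.
    move: wL; rewrite mem_cat (negbTE nb) /= => /mapP [t' t'in wt'].
    rewrite mem_iota add1n ltnS in t'in.
    by rewrite mem_filter wv /= wt' hD // -wt'.
  by rewrite mem_filter e /= hD.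
have hab : a < b by apply: lt_trans hb2.
set l := (b - v) / (b - a).
have ba0 : 0 < b - a by rewrite subr_gt0.
have l0 : 0 <= l by apply: divr_ge0; rewrite subr_ge0 ltW.
have l1 : l <= 1 by rewrite /l ler_pdivrMr // mul1r lerD2l lerN2 ltW.
have hcomb : forall t, D t = l * Da t + (1 - l) * Db t.
  move=> t; rewrite /Da /Db; case: (eqVneq (D t) v) => e; last by ring.
  rewrite e /l; field; by rewrite lt0r_neq0.
have := cost_comb T cP cI cB bP x l0 l1 hcomb; rewrite le_max => /orP [h|h].
- have [D' [h1 h2 h3]] := IH Da s' hs' Ua (sub a ha1 (negbT (lt_eqF ha2))).
  by exists D'; split => //; apply: le_trans h h3.
- have [D' [h1 h2 h3]] := IH Db s' hs' Ub (sub b hb1 (negbT (gt_eqF hb2))).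
  by exists D'; split => //; apply: le_trans h h3.
Qed.


Definition canon (R : realFieldType) (g : nat -> R) k n : seq (node R) :=
  [seq Nd t (g t) | t <- iota k n] ++ [:: Snk R].

Lemma canonS (R : realFieldType) (g : nat -> R) k n :
  canon g k n.+1 = Nd k (g k) :: canon g k.+1 n.
Proof. by []. Qed.

Lemma path_mid (R : realFieldType) T (Dhat Delta : nat -> R) (g : nat -> R) n : forall k,
  (1 <= k)%N -> (k + n)%N = T ->
  path (arc T Dhat Delta) (Nd k (g k)) (canon g k.+1 n) <->
  (forall t, (k <= t < T)%N -> g t <= g t.+1 /\ inDk T Dhat Delta t.+1 (g t.+1)).
Proof.
elim: n => [|n IH] k k1 kT.
  rewrite addn0 in kT; rewrite /canon /= k1 kT eqxx /=; split => // _ t.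
  by rewrite leqNgt andbC => /andP [->].
have IH' := IH k.+1 isT (etrans (addSnnS k n) kT).
have kT1 : (k.+1 <= T)%N by rewrite -kT addnS ltnS leq_addr.
rewrite canonS /= kT1 eqxx /=; split.
  move=> /andP [/and3P [h1 h2 h2'] /IH' h3] t /andP [kt tT].
  case: (ltngtP k t) kt => // [kt _|<- _]; last by split.
  by apply: h3; rewrite kt tT.
move=> h; apply/andP; split.
  by have [hh1 hh2] := h k (andb_true_intro (conj (leqnn k) kT1)); rewrite ltnS k1 hh1 hh2.
apply IH' => t /andP [kt tT]; apply: h; by rewrite tT (ltnW kt).
Qed.

Lemma path_src (R : realFieldType) T (Dhat Delta : nat -> R) (g : nat -> R) :
  (1 <= T)%N ->
  path (arc T Dhat Delta) (Src R) (canon g 1 T) <->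
  inDk T Dhat Delta 1 (g 1) /\
  (forall t, (1 <= t < T)%N -> g t <= g t.+1 /\ inDk T Dhat Delta t.+1 (g t.+1)).
Proof.
move=> T1.
have -> : canon g 1 T = Nd 1 (g 1) :: canon g 2 T.-1 by rewrite -canonS prednK.
have PM := @path_mid R T Dhat Delta g T.-1 1 isT (etrans (add1n _) (prednK T1)).
rewrite /=; split.
  by move=> /andP [-> /PM h].
by move=> [-> h]; apply/PM.
Qed.

Lemma len_canon (R : realFieldType) T cP cI cB bP (x : nat -> R) (g : nat -> R) n :
  forall k (u : node R),
  \sum_(e <- zip (u :: canon g k n) (canon g k n)) arc_len T cP cI cB bP x e.1 e.2 =
  \sum_(k <= t < k + n) pcost T cP cI cB bP x t (g t).
Proof.
elim: n => [|n IH] k u.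
  by rewrite /canon /= big_cons big_nil addn0 big_geq // addr0.
rewrite canonS /= big_cons IH /=.
by rewrite addSn addnS [in RHS]big_ltn // ltnS leq_addr.
Qed.

Lemma wt_canon (R : realFieldType) (Dhat : nat -> R) (g : nat -> R) n :
  forall k (u : node R),
  (\sum_(e <- zip (u :: canon g k n) (canon g k n)) arc_wt Dhat e.1 e.2 =
  \sum_(k <= t < k + n) (g t != Dhat t : nat))%N.
Proof.
elim: n => [|n IH] k u.
  by rewrite /canon /= big_cons big_nil big_geq ?addn0.
rewrite canonS /= big_cons IH /=.
by rewrite addSn addnS [in RHS]big_ltn // ltnS leq_addr.
Qed.

Lemma shape_mid (R : realFieldType) T (Dhat Delta : nat -> R) (q : seq (node R)) :
  forall k d, path (arc T Dhat Delta) (Nd k d) q -> last (Nd k d) q = Snk R ->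
  (k <= T)%N -> exists g : nat -> R, q = canon g k.+1 (T - k).
Proof.
elim: q => [|y q IH] k d //= /andP [hy hp] hl kT.
case: y hy hp hl => //.
  move=> /andP [_ /eqP kT'] hp _; subst k.
  exists (fun _ => 0); rewrite subnn /canon /=.
  by case: q {IH} hp.
move=> k' d' /and5P [_ k'T /eqP k'k _ _] hp hl; subst k'.
have [g hg] := IH _ _ hp hl k'T.
exists (fun t => if t == k.+1 then d' else g t).
have -> : (T - k = (T - k.+1).+1)%N by rewrite subnSK.
rewrite canonS eqxx hg /canon; congr (_ :: (_ ++ _)).
apply/esym/eq_in_map => t; rewrite mem_iota => /andP [h _].
by rewrite (gtn_eqF h).
Qed.

Lemma shape_src (R : realFieldType) T (Dhat Delta : nat -> R) (p : seq (node R)) :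
  (1 <= T)%N -> st_path T Dhat Delta p -> exists g : nat -> R, p = canon g 1 T.
Proof.
move=> T1 [hp hl]; case: p hp hl => [|y q] //= /andP [hy hp] hl.
case: y hy hp hl => // k d /andP [/eqP k1 _] hp hl; subst k.
have [g hg] := shape_mid hp hl T1.
exists (fun t => if t == 1%N then d else g t).
rewrite -(prednK T1) canonS eqxx hg subn1 /canon; congr (_ :: (_ ++ _)).
apply/esym/eq_in_map => t; rewrite mem_iota => /andP [h _].
by rewrite (gtn_eqF h).
Qed.


Lemma path_to_D (R : realFieldType) T cP cI cB bP (x : nat -> R) (Dhat Delta : nat -> R) Gam p :
  (1 <= T)%N -> rlp_feasible T Dhat Delta Gam p ->
  exists g, inUd T Dhat Delta Gam g /\
    scen_cost T cP cI cB bP x g = path_len T cP cI cB bP x p.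
Proof.
move=> T1 [hst hw]; have [g hg] := shape_src T1 hst; subst p.
case: hst => hp _.
have [h1 h2] := (path_src Dhat Delta g T1).1 hp.
exists g; split; last by rewrite /path_len len_canon.
split; [|split].
- by move=> t ht; have [] := h2 t ht.
- move=> t /andP [t1 tT]; case: (ltngtP 1 t) t1 => // [lt1 _|<- _].
    have ht' : (1 <= t.-1 < T)%N.
      by apply/andP; split; lia.
    have [_ /andP [h _]] := h2 t.-1 ht'.
    by rewrite prednK ?(ltnW lt1) in h.
  by case/andP: h1.
- by move: hw; rewrite /path_wt wt_canon.
Qed.

Lemma D_to_path (R : realFieldType) T cP cI cB bP (x : nat -> R) (Dhat Delta : nat -> R) Gam D :
  (1 <= T)%N -> inUd T Dhat Delta Gam D ->
  exists p, rlp_feasible T Dhat Delta Gam p /\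
    scen_cost T cP cI cB bP x D <= path_len T cP cI cB bP x p.
Proof.
move=> T1 hU.
have hD : forall t, (1 <= t <= T)%N -> D t \notin breakpoints T Dhat Delta ->
    D t \in [seq D t | t <- iota 1 T].
  by move=> t ht _; apply: map_f; rewrite mem_iota add1n ltnS.
have [D' [[hm [hb hg]] hbp hc]] := @reduce R T cP cI cB bP x Dhat Delta Gam
  (size [seq D t | t <- iota 1 T]) D [seq D t | t <- iota 1 T] (leqnn _) hU hD.
exists (canon D' 1 T); split; last by rewrite /path_len len_canon.
split; last by rewrite /path_wt wt_canon.
split; last by rewrite /canon last_cat.
apply/(path_src Dhat Delta D' T1); split.
  by rewrite /inDk hb ?T1 // hbp // T1.
move=> t /andP [t1 tT]; split; first by apply: hm; rewrite t1.
by rewrite /inDk hb ?hbp //; apply/andP; split.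
Qed.

Unset Implicit Arguments.

Theorem proposition1 (R : realFieldType) (T m : nat) (A : 'M[R]_(m, T)) (b : 'cV[R]_m)
  (cP cI cB bP : R) (Dhat Delta : nat -> R) (Gam : nat) (x : nat -> R) (Cstar : R) :
  (1 <= T)%N ->
  (Gam <= T)%N ->
  (forall t, (1 <= t <= T)%N -> 0 <= Dhat t) ->
  (forall t, (1 <= t < T)%N -> Dhat t <= Dhat t.+1) ->
  (forall t, (1 <= t <= T)%N -> 0 <= Delta t <= Dhat t) ->
  inXset A b x ->
  (exists D, inUd T Dhat Delta Gam D /\ scen_cost T cP cI cB bP x D = Cstar /\
     forall D', inUd T Dhat Delta Gam D' -> scen_cost T cP cI cB bP x D' <= Cstar)
  <->
  (exists p, rlp_feasible T Dhat Delta Gam p /\ path_len T cP cI cB bP x p = Cstar /\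
     forall p', rlp_feasible T Dhat Delta Gam p' -> path_len T cP cI cB bP x p' <= Cstar).
Proof.
move=> T1 _ _ _ _ _; split.
  move=> [D [hD [hc hmax]]].
  have [p [hp hl]] := D_to_path cP cI cB bP x T1 hD.
  have hp' : forall p', rlp_feasible T Dhat Delta Gam p' ->
      path_len T cP cI cB bP x p' <= Cstar.
    move=> p' fp'; have [g [hg <-]] := path_to_D cP cI cB bP x T1 fp'.
    exact: hmax.
  exists p; split => //; split => //.
  by apply/eqP; rewrite eq_le hp' //= -hc hl.
move=> [p [hp [hl hmax]]].
have [g [hg hc]] := path_to_D cP cI cB bP x T1 hp.
exists g; split => //; split; first by rewrite hc.
move=> D' hD'; have [p' [hp' hl']] := D_to_path cP cI cB bP x T1 hD'.
by apply: le_trans hl' _; apply: hmax.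
Qed.
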